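(* Let $L$ be a complex Leibniz algebra, let $I$ be the ideal of $L$ generated by all squares $[x,x]$, $x\in L$, and suppose that $L/I\cong\mathfrak{e}(2)$ and that $I$, regarded as a right $\mathfrak{e}(2)$-module via $(i,x+I)\mapsto[i,x]$, is isomorphic to the four-dimensional module $V$ with basis $X_1,X_2,X_3,X_4$ and action $(X_1,p_+)=X_2$, $(X_3,p_-)=X_4$, $(X_1,l)=\tfrac12X_1$, $(X_2,l)=-\tfrac12X_2$, $(X_3,l)=-\tfrac12X_3$, $(X_4,l)=\tfrac12X_4$ (all other products of basis elements of $V$ with $l,p_+,p_-$ being zero). Then there exists a basis $\{l,p_+,p_-,X_1,X_2,X_3,X_4\}$ of $L$ (with $X_1,\dots,X_4\in I$ and $l,p_+,p_-$ mapping to the corresponding basis elements of $\mathfrak{e}(2)$) in which the only nonzero products are $[l,p_+]=p_+$, $[p_+,l]=-p_+$, $[l,p_-]=-p_-$, $[p_-,l]=p_-$, $[X_1,p_+]=X_2$, $[X_3,p_-]=X_4$, $[X_1,l]=\tfrac12X_1$, $[X_2,l]=-\tfrac12X_2$, $[X_3,l]=-\tfrac12X_3$, $[X_4,l]=\tfrac12X_4$.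
   Context: A (right) Leibniz algebra is a vector space $L$ with a bilinear bracket satisfying $[[x,y],z]=[[x,z],y]+[x,[y,z]]$ for all $x,y,z\in L$. The ideal $I$ generated by the squares satisfies $[L,I]=0$, so $L/I$ is a Lie algebra and $I$ is a right $L/I$-module via $(i,x+I)\mapsto[i,x]$. Here $\mathfrak{e}(2)$ denotes the complex (complexified Euclidean) Lie algebra with basis $\{l,p_+,p_-\}$ and brackets $[l,p_+]=p_+$, $[l,p_-]=-p_-$, $[p_+,p_-]=0$. A right module $V$ over a Lie algebra $\mathfrak g$ satisfies $((v,x),y)-((v,y),x)=(v,[x,y])$. *)

(* Defs.v *)
From HB Require Import structures.
From mathcomp Require Import all_boot all_order all_algebra.
From mathcomp Require Import complex reals.
Set Implicit Arguments. Unset Strict Implicit. Unset Printing Implicit Defensive.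
Import Order.TTheory GRing.Theory Num.Theory.
Local Open Scope ring_scope.

Section Defs.
Variable C : fieldType.
Variable L : lmodType C.
Implicit Types (br : L -> L -> L).

Definition bilinear_br br : Prop :=
  (forall (a : C) (x y z : L), br (a *: x + y) z = a *: br x z + br y z) /\
  (forall (a : C) (x y z : L), br z (a *: x + y) = a *: br z x + br z y).

Definition right_leibniz br : Prop :=
  forall x y z : L, br (br x y) z = br (br x z) y + br x (br y z).

Definition is_ideal br (S : L -> Prop) : Prop :=
  [/\ S 0,
      (forall (a : C) (x y : L), S x -> S y -> S (a *: x + y)) &
      (forall s x : L, S s -> S (br s x) /\ S (br x s))].

Definition sq_ideal br (v : L) : Prop :=
  forall S : L -> Prop, is_ideal br S -> (forall x : L, S (br x x)) -> S v.

Definition is_basis n (b : 'I_n -> L) : Prop :=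
  forall v : L, exists! c : 'I_n -> C, v = \sum_(i < n) c i *: b i.
End Defs.

Section E2.
Variable C : fieldType.

(* e(2) = C^3 with basis e0 = l, e1 = p_+, e2 = p_-, coordinates a 0 (inord k) *)
Definition e2basis (k : nat) : 'rV[C]_3 :=
  \row_(j < 3) (if val j == k then 1 else 0).

Definition e2br (a b : 'rV[C]_3) : 'rV[C]_3 :=
  let a0 := a 0 (inord 0) in let a1 := a 0 (inord 1) in let a2 := a 0 (inord 2) in
  let b0 := b 0 (inord 0) in let b1 := b 0 (inord 1) in let b2 := b 0 (inord 2) in
  \row_(j < 3) (match val j with
                | 1 => a0 * b1 - a1 * b0
                | 2 => a2 * b0 - a0 * b2
                | _ => 0 end).

(* the right e(2)-module V = C^4 with basis X1..X4 (coordinates 0..3) *)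
Definition Vact (v : 'rV[C]_4) (a : 'rV[C]_3) : 'rV[C]_4 :=
  let a0 := a 0 (inord 0) in let a1 := a 0 (inord 1) in let a2 := a 0 (inord 2) in
  let v0 := v 0 (inord 0) in let v1 := v 0 (inord 1) in
  let v2 := v 0 (inord 2) in let v3 := v 0 (inord 3) in
  \row_(j < 4) (match val j with
                | 0 => a0 * 2^-1 * v0
                | 1 => - (a0 * 2^-1 * v1) + a1 * v0
                | 2 => - (a0 * 2^-1 * v2)
                | 3 => a0 * 2^-1 * v3 + a2 * v2
                | _ => 0 end).

(* multiplication table of the theorem, basis indices
   0 = l, 1 = p_+, 2 = p_-, 3 = X1, 4 = X2, 5 = X3, 6 = X4 *)
Definition leib_table (L : lmodType C) (b : 'I_7 -> L) (i j : 'I_7) : L :=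
  match val i, val j with
  | 0, 1 => b (inord 1)
  | 1, 0 => - b (inord 1)
  | 0, 2 => - b (inord 2)
  | 2, 0 => b (inord 2)
  | 3, 1 => b (inord 4)
  | 5, 2 => b (inord 6)
  | 3, 0 => 2^-1 *: b (inord 3)
  | 4, 0 => - (2^-1 *: b (inord 4))
  | 5, 0 => - (2^-1 *: b (inord 5))
  | 6, 0 => 2^-1 *: b (inord 6)
  | _, _ => 0
  end.
End E2.

(* Main.v *)
Require Import Defs.
From HB Require Import structures.
From mathcomp Require Import all_boot all_order all_algebra.
From mathcomp Require Import complex reals.
From mathcomp Require Import zify.
From Stdlib Require Import FunctionalExtensionality.
Import Order.TTheory GRing.Theory Num.Theory.
Local Open Scope ring_scope.
Lemma e2E (C : fieldType) (k m : nat) : (m < 3)%N -> (e2basis C k) 0 (inord m) = if m == k then 1 else 0.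
Proof. by move=> hm; rewrite mxE /= inordK. Qed.

Definition u4 (C : fieldType) (k : nat) : 'rV[C]_4 := \row_(j < 4) (if val j == k then 1 else 0).
Lemma u4E (C : fieldType) (k m : nat) : (m < 4)%N -> (u4 C k) 0 (inord m) = if m == k then 1 else 0.
Proof. by move=> hm; rewrite mxE /= inordK. Qed.

Definition sg4 (C : fieldType) (j : 'I_4) : C :=
  if (val j == 0%N) || (val j == 3%N) then 2^-1 else - 2^-1.

Lemma Vact_e0 (C : fieldType) (v : 'rV[C]_4) j : Vact v (e2basis C 0) 0 j = sg4 C j * v 0 j.
Proof.
rewrite /Vact mxE !e2E // /sg4 /=.
have hj := ltn_ord j; rewrite -[j]inord_val; move: (val j) hj => m hm; rewrite /= inordK //.
case: m hm => [|[|[|[|m]]]] hm //=; rewrite ?mul1r ?mul0r ?addr0 ?mulNr //.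
Qed.

Notation simpE := (mul1r, mulr1, mul0r, mulr0, add0r, addr0, oppr0, div1r, opprK, subr0, sub0r).

Ltac rowt := apply/rowP; let j := fresh "j" in let hj := fresh "hj" in
  let m := fresh "m" in let hm := fresh "hm" in
  intro j; have hj := ltn_ord j; rewrite -[j]inord_val;
  move: (val j) hj => m hm;
  rewrite /Vact /u4 /e2basis /e2br !mxE /= ?inordK //; rewrite ?mxE /= ?inordK //;
  case: m hm => [|[|[|[|m]]]] hm //=;
  rewrite ?simpE //.

Lemma Va00 (C : fieldType) : Vact (u4 C 0) (e2basis C 0) = 2^-1 *: (u4 C 0). Proof. rowt. Qed.
Lemma Va01 (C : fieldType) : Vact (u4 C 0) (e2basis C 1) = (u4 C 1). Proof. rowt. Qed.
Lemma Va02 (C : fieldType) : Vact (u4 C 0) (e2basis C 2) = 0. Proof. rowt. Qed.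
Lemma Va10 (C : fieldType) : Vact (u4 C 1) (e2basis C 0) = - (2^-1 *: (u4 C 1)). Proof. rowt. Qed.
Lemma Va11 (C : fieldType) : Vact (u4 C 1) (e2basis C 1) = 0. Proof. rowt. Qed.
Lemma Va12 (C : fieldType) : Vact (u4 C 1) (e2basis C 2) = 0. Proof. rowt. Qed.
Lemma Va20 (C : fieldType) : Vact (u4 C 2) (e2basis C 0) = - (2^-1 *: (u4 C 2)). Proof. rowt. Qed.
Lemma Va21 (C : fieldType) : Vact (u4 C 2) (e2basis C 1) = 0. Proof. rowt. Qed.
Lemma Va22 (C : fieldType) : Vact (u4 C 2) (e2basis C 2) = (u4 C 3). Proof. rowt. Qed.
Lemma Va30 (C : fieldType) : Vact (u4 C 3) (e2basis C 0) = 2^-1 *: (u4 C 3). Proof. rowt. Qed.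
Lemma Va31 (C : fieldType) : Vact (u4 C 3) (e2basis C 1) = 0. Proof. rowt. Qed.
Lemma Va32 (C : fieldType) : Vact (u4 C 3) (e2basis C 2) = 0. Proof. rowt. Qed.
Lemma Vact0 (C : fieldType) (v : 'rV[C]_4) : Vact v 0 = 0. Proof. rowt. Qed.
Lemma E00 (C : fieldType) : e2br (e2basis C 0) (e2basis C 0) = 0. Proof. rowt. Qed.
Lemma E01 (C : fieldType) : e2br (e2basis C 0) (e2basis C 1) = (e2basis C 1). Proof. rowt. Qed.
Lemma E02 (C : fieldType) : e2br (e2basis C 0) (e2basis C 2) = - (e2basis C 2). Proof. rowt. Qed.
Lemma E10 (C : fieldType) : e2br (e2basis C 1) (e2basis C 0) = - (e2basis C 1). Proof. rowt. Qed.
Lemma E11 (C : fieldType) : e2br (e2basis C 1) (e2basis C 1) = 0. Proof. rowt. Qed.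
Lemma E12 (C : fieldType) : e2br (e2basis C 1) (e2basis C 2) = 0. Proof. rowt. Qed.
Lemma E20 (C : fieldType) : e2br (e2basis C 2) (e2basis C 0) = (e2basis C 2). Proof. rowt. Qed.
Lemma E21 (C : fieldType) : e2br (e2basis C 2) (e2basis C 1) = 0. Proof. rowt. Qed.
Lemma E22 (C : fieldType) : e2br (e2basis C 2) (e2basis C 2) = 0. Proof. rowt. Qed.
Lemma edec (C : fieldType) (y : 'rV[C]_3) : y = y 0 (inord 0) *: (e2basis C 0) + y 0 (inord 1) *: (e2basis C 1) + y 0 (inord 2) *: (e2basis C 2).
Proof. rowt. Qed.
Lemma udec (C : fieldType) (t : 'rV[C]_4) : t = t 0 (inord 0) *: (u4 C 0) + t 0 (inord 1) *: (u4 C 1) + t 0 (inord 2) *: (u4 C 2) + t 0 (inord 3) *: (u4 C 3).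
Proof. rowt. Qed.

Lemma sg4_neq (C : numFieldType) (j : 'I_4) (k : int) : sg4 C j - k%:~R != 0.
Proof.
have h2 : (2 : C) != 0 by rewrite pnatr_eq0.
rewrite /sg4; case: ifP => _; rewrite subr_eq0; apply/negP => /eqP hk.
- have h1 : (1 : C) = (2 * k)%:~R.
    by rewrite intrM -hk -[2%:~R]/(2%:R : C) mulfV.
  have : (1 : int) = 2 * k by apply: (@intr_inj C); rewrite -h1.
  lia.
- have h1 : (-1 : C) = (2 * k)%:~R.
    by rewrite intrM -hk -[2%:~R]/(2%:R : C) mulrN mulfV.
  have : (-1 : int) = 2 * k by apply: (@intr_inj C); rewrite -h1 rmorphN1.
  lia.
Qed.

Lemma Vsolve (C : numFieldType) (k : int) (c : 'rV[C]_4) :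
  exists v, Vact v (e2basis C 0) - k%:~R *: v = c.
Proof.
exists (\row_j (c 0 j / (sg4 C j - k%:~R))).
apply/rowP => j; rewrite [LHS]mxE Vact_e0 !mxE -mulrBl mulrC divfK //; exact: sg4_neq.
Qed.

Lemma Vuniq (C : numFieldType) (k : int) (v : 'rV[C]_4) :
  Vact v (e2basis C 0) = k%:~R *: v -> v = 0.
Proof.
move=> h; apply/rowP => j; move/rowP: h => /(_ j).
rewrite Vact_e0 !mxE => /eqP; rewrite -subr_eq0 -mulrBl mulf_eq0 (negbTE (sg4_neq _ _ _)) /=.
by move/eqP.
Qed.

Lemma sum7 (V : zmodType) (F : 'I_7 -> V) : \sum_(i<7) F i = F (inord 0) + F (inord 1) + F (inord 2) + F (inord 3) + F (inord 4) + F (inord 5) + F (inord 6).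
Proof.
rewrite (eq_bigr (fun i : 'I_7 => F (inord i))); last by move=> i _; rewrite inord_val.
rewrite -(big_mkord xpredT (fun i => F (inord i))).
by rewrite /index_iota /= !big_cons big_nil addr0 !addrA.
Qed.

Lemma ecoef (C : fieldType) (a0 a1 a2 : C) :
  let y := a0 *: e2basis C 0 + a1 *: e2basis C 1 + a2 *: e2basis C 2 in
  [/\ y 0 (inord 0) = a0, y 0 (inord 1) = a1 & y 0 (inord 2) = a2].
Proof. by rewrite /e2basis !mxE /= !inordK //= ?simpE. Qed.

Lemma ucoef (C : fieldType) (a0 a1 a2 a3 : C) :
  let y := a0 *: u4 C 0 + a1 *: u4 C 1 + a2 *: u4 C 2 + a3 *: u4 C 3 in
  [/\ y 0 (inord 0) = a0, y 0 (inord 1) = a1, y 0 (inord 2) = a2 & y 0 (inord 3) = a3].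
Proof. by rewrite /u4 !mxE /= !inordK //= ?simpE. Qed.

Lemma grp1 (V : zmodType) (a b d : V) : a - b + (- a - d) = - (b + d).
Proof. by rewrite addrACA subrr add0r opprD. Qed.

Lemma grp2 (V : zmodType) (a b d : V) : a + b + (d - a) = b + d.
Proof. by rewrite addrC addrA subrK addrC. Qed.

Local Open Scope complex_scope.

Theorem mainTheorem1 (R : realType) (L : lmodType R[i]) (br : L -> L -> L)
  (pi : {linear L -> 'rV[R[i]]_3}) (phi : {linear 'rV[R[i]]_4 -> L}) :
  bilinear_br br -> right_leibniz br ->
  (* L/I ~ e(2): pi is a surjective Lie morphism with kernel I *)
  (forall y : 'rV[R[i]]_3, exists x : L, pi x = y) ->
  (forall x : L, pi x = 0 <-> sq_ideal br x) ->
  (forall x y : L, pi (br x y) = e2br (pi x) (pi y)) ->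
  (* I ~ V as right e(2)-modules: phi is injective with image I, equivariant *)
  injective phi ->
  (forall w : L, sq_ideal br w <-> exists v, w = phi v) ->
  (forall (v : 'rV[R[i]]_4) (x : L), phi (Vact v (pi x)) = br (phi v) x) ->
  exists b : 'I_7 -> L,
    [/\ is_basis b,
        (forall k : 'I_7, (3 <= val k)%N -> sq_ideal br (b k)),
        (forall k : 'I_7, (val k < 3)%N -> pi (b k) = e2basis _ (val k)) &
        (forall i j : 'I_7, br (b i) (b j) = leib_table b i j)].
Proof.
move=> [Hl Hr] Hleib Hsurj Hker Hhom Hinj Him Heq.
have br0l z : br 0 z = 0.
  have := Hl 1 0 0 z; rewrite !scale1r addr0 => h.
  by apply: (addrI (br 0 z)); rewrite addr0 -h.
have br0r z : br z 0 = 0.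
  have := Hr 1 0 0 z; rewrite !scale1r addr0 => h.
  by apply: (addrI (br z 0)); rewrite addr0 -h.
have brDl x y z : br (x + y) z = br x z + br y z.
  by have := Hl 1 x y z; rewrite !scale1r.
have brDr x y z : br z (x + y) = br z x + br z y.
  by have := Hr 1 x y z; rewrite !scale1r.
have brZl a x z : br (a *: x) z = a *: br x z.
  by have := Hl a x 0 z; rewrite !addr0 br0l addr0.
have brZr a x z : br z (a *: x) = a *: br z x.
  by have := Hr a x 0 z; rewrite !addr0 br0r addr0.
have brNl x z : br (- x) z = - br x z by rewrite -scaleN1r brZl scaleN1r.
have brNr x z : br z (- x) = - br z x by rewrite -scaleN1r brZr scaleN1r.
have brBl x y z : br (x - y) z = br x z - br y z by rewrite brDl brNl.
have brBr x y z : br z (x - y) = br z x - br z y by rewrite brDr brNr.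
have brI x v : br x (phi v) = 0.
  have hS : sq_ideal br (phi v) by apply/Him; exists v.
  apply: (hS (fun w => forall x, br x w = 0)); last first.
    move=> y z; apply: (addrI (br (br z y) y)); rewrite addr0 -Hleib //.
  split.
  - by move=> y; rewrite br0r.
  - by move=> a y z hy hz w; rewrite Hr hy hz scaler0 addr0.
  - move=> s y hs; split => w.
      have := Hleib w s y; rewrite hs br0l hs => h.
      by apply: (addrI 0); rewrite -h addr0.
    by rewrite hs br0r.
have piI v : pi (phi v) = 0 by apply/Hker/Him; exists v.
have kerI x : pi x = 0 -> exists v, x = phi v.
  by move=> h; apply/Him/Hker.
have [l0 hl0] := Hsurj (e2basis _ 0).
have [p0 hp0] := Hsurj (e2basis _ 1).
have [q0 hq0] := Hsurj (e2basis _ 2).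
have [a ha] : exists a, br l0 l0 = phi a by apply: kerI; rewrite Hhom hl0 E00.
have [v1 hv1] := Vsolve _ 0 (- a).
pose l := l0 + phi v1.
have pil : pi l = e2basis _ 0 by rewrite /l linearD piI addr0.
have hv1' : Vact v1 (e2basis _ 0) = - a by rewrite -hv1 mulr0z scale0r subr0.
have Rll : br l l = 0.
  rewrite {1}/l brDl -Heq pil hv1' /l brDr brI addr0 ha linearN subrr //.
have [c hc] : exists c, br p0 l + p0 = phi c.
  by apply: kerI; rewrite linearD Hhom pil hp0 E10 addNr.
have [v2 hv2] := Vsolve _ (-1) (- c).
pose p := p0 + phi v2.
have pip : pi p = e2basis _ 1 by rewrite /p linearD piI addr0.
have hv2' : Vact v2 (e2basis _ 0) = - c - v2.
  by rewrite -hv2 intrN mulr1z scaleN1r opprK addrK.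
have Rpl : br p l = - p.
  rewrite {1}/p brDl -Heq pil hv2' linearB linearN.
  have -> : br p0 l = phi c - p0 by rewrite -hc addrK.
  by rewrite grp1.
have [d hd] : exists c, br q0 l - q0 = phi c.
  by apply: kerI; rewrite linearB Hhom pil hq0 E20 subrr.
have [v3 hv3] := Vsolve _ 1 (- d).
pose q := q0 + phi v3.
have piq : pi q = e2basis _ 2 by rewrite /q linearD piI addr0.
have hv3' : Vact v3 (e2basis _ 0) = v3 - d.
  by rewrite -[Vact _ _](subrK (1%:~R *: v3)) hv3 mulr1z scale1r addrC.
have Rql : br q l = q.
  rewrite {1}/q brDl -Heq pil hv3' linearB.
  have -> : br q0 l = phi d + q0 by rewrite -hd subrK.
  by rewrite grp2.
have D x y (s t : R[i]) : br x l = s *: x -> br y l = t *: y ->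
    br (br x y) l = (s + t) *: br x y.
  by move=> hx hy; rewrite Hleib hx hy brZl brZr scalerDl.
have U z (k : int) : pi z = 0 -> br z l = k%:~R *: z -> z = 0.
  move=> h1; have [v ->] := kerI z h1; rewrite -Heq pil -linearZ => /Hinj.
  by move/Vuniq ->; rewrite linear0.
have El : br l l = 0 *: l by rewrite Rll scale0r.
have Ep : br p l = (-1) *: p by rewrite Rpl scaleN1r.
have Eq : br q l = 1 *: q by rewrite Rql scale1r.
have Rlp : br l p = p.
  apply/eqP; rewrite -subr_eq0; apply/eqP; apply: (U _ (-1)).
  - by rewrite linearB Hhom pil pip E01 subrr.
  - by rewrite brBl (D _ _ _ _ El Ep) Ep intrN mulr1z add0r scalerBr.
have Rlq : br l q = - q.
  apply/eqP; rewrite -addr_eq0; apply/eqP; apply: (U _ 1).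
  - by rewrite linearD Hhom pil piq E02 addNr.
  - by rewrite brDl (D _ _ _ _ El Eq) Eq mulr1z add0r !scale1r.
have Rpp : br p p = 0.
  apply: (U _ (-1 + -1)).
  - by rewrite Hhom pip E11.
  - by rewrite (D _ _ _ _ Ep Ep) intrD intrN mulr1z.
have Rqq : br q q = 0.
  apply: (U _ (1 + 1)).
  - by rewrite Hhom piq E22.
  - by rewrite (D _ _ _ _ Eq Eq) intrD mulr1z.
have Rpq : br p q = 0.
  apply: (U _ 0).
  - by rewrite Hhom pip piq E12.
  - by rewrite (D _ _ _ _ Ep Eq) addNr mulr0z.
have Rqp : br q p = 0.
  apply: (U _ 0).
  - by rewrite Hhom piq pip E21.
  - by rewrite (D _ _ _ _ Eq Ep) addrN mulr0z.
clearbody l p q.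
pose b := fun k : 'I_7 => match val k with 0 => l | 1 => p | 2 => q
  | 3 => phi (u4 _ 0) | 4 => phi (u4 _ 1) | 5 => phi (u4 _ 2) | _ => phi (u4 _ 3) end.
exists b; split.
- move=> v.
  have [t ht] : exists t, v - (pi v 0 (inord 0) *: l + pi v 0 (inord 1) *: p + pi v 0 (inord 2) *: q) = phi t.
    apply: kerI; apply/eqP; rewrite linearB subr_eq0 !linearD !linearZ pil pip piq; apply/eqP; exact: edec.
  pose cc := fun k : 'I_7 => match val k with 0 => pi v 0 (inord 0) | 1 => pi v 0 (inord 1)
    | 2 => pi v 0 (inord 2) | 3 => t 0 (inord 0) | 4 => t 0 (inord 1) | 5 => t 0 (inord 2)
    | _ => t 0 (inord 3) end.
  have hv : v = pi v 0 (inord 0) *: l + pi v 0 (inord 1) *: p + pi v 0 (inord 2) *: q + phi t.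
    by rewrite -ht addrC subrK.
  exists cc; split.
  + rewrite sum7 /cc /b /= !inordK //.
    by rewrite {1}hv {1}(udec _ t) !linearD !linearZ !addrA.
  + move=> cq; rewrite sum7 /b /= !inordK // => hcq.
    have hpi := congr1 pi hcq.
    rewrite !linearD !linearZZ pil pip piq !piI !scaler0 !addr0 in hpi.
    have [h0 h1 h2] := ecoef _ (cq (inord 0)) (cq (inord 1)) (cq (inord 2)).
    rewrite -hpi in h0 h1 h2.
    have hphi : phi t = phi (cq (inord 3) *: u4 _ 0 + cq (inord 4) *: u4 _ 1
                          + cq (inord 5) *: u4 _ 2 + cq (inord 6) *: u4 _ 3).
      have e1 : v = (cq (inord 0) *: l + cq (inord 1) *: p + cq (inord 2) *: q) +
        (cq (inord 3) *: phi (u4 _ 0) + cq (inord 4) *: phi (u4 _ 1)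
         + cq (inord 5) *: phi (u4 _ 2) + cq (inord 6) *: phi (u4 _ 3)).
        by rewrite hcq !addrA.
      rewrite !linearD !linearZZ -ht h0 h1 h2 {1}e1.
      by rewrite addrC addKr.
    move/Hinj: hphi => htc.
    have [k0 k1 k2 k3] := ucoef _ (cq (inord 3)) (cq (inord 4)) (cq (inord 5)) (cq (inord 6)).
    rewrite -htc in k0 k1 k2 k3.
    apply: functional_extensionality => k; rewrite /cc; have hk := ltn_ord k.
    rewrite -[k]inord_val; move: (val k) hk => m hm; rewrite /= inordK //.
    by case: m hm => [|[|[|[|[|[|[|m]]]]]]] hm.
- move=> k hk; rewrite /b; case: k hk => [[|[|[|[|[|[|[|m]]]]]]] hm] //= _; apply/Him; by eexists.
- move=> k; rewrite /b; case: k => [[|[|[|m]]] hm] //= _.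
- move=> ii jj; have hi := ltn_ord ii; have hj := ltn_ord jj; rewrite -[ii]inord_val -[jj]inord_val.
  move: (val ii) (val jj) hi hj => m n hm hn; rewrite /leib_table /b /= !inordK //.
  case: m hm => [|[|[|[|[|[|[|m]]]]]]] hm //; case: n hn => [|[|[|[|[|[|[|n]]]]]]] hn //=;
  rewrite ?brI ?Rll ?Rlp ?Rlq ?Rpl ?Rpp ?Rpq ?Rql ?Rqp ?Rqq //;
  rewrite -Heq ?pil ?pip ?piq ?Va00 ?Va01 ?Va02 ?Va10 ?Va11 ?Va12 ?Va20 ?Va21 ?Va22 ?Va30 ?Va31 ?Va32;
  rewrite ?linear0 ?linearN ?linearZ //.
Qed.
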